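(* Let $\mathcal{P}=\{x\in\mathbb{R}^n:\tfrac12(\max_i x_i-\min_i x_i)\le1\}$. Let $x\in\mathcal{P}$, let $\bar F$ be a (closed) face of $\mathcal{P}$, and let $B$ be a stochastic $n\times n$ matrix with all diagonal entries positive. Then $Bx\in\bar F$ implies $x\in\bar F$. Furthermore, for any stochastic $n\times n$ matrices $A$ and $C$, $ABCx\in\bar F$ implies $ACx\in\bar F$.
   Context: A stochastic matrix is a nonnegative matrix whose rows sum to $1$. A face of a polyhedron $\mathcal{Q}$ is a non-empty subset $F$ with $F=\mathcal{Q}$ or $F=\mathcal{Q}\cap\{x:b^\top x=c\}$ where $b^\top x\le c$ for all $x\in\mathcal{Q}$. *)

(* Defs.v *)
From mathcomp Require Import all_boot all_order all_algebra.
From mathcomp Require Import reals.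
Set Implicit Arguments. Unset Strict Implicit. Unset Printing Implicit Defensive.
Import Order.TTheory GRing.Theory Num.Theory.
Local Open Scope ring_scope.

Section Defs.
Variable R : realType.
Variable n : nat.

(* max_i x_i and min_i x_i over the n coordinates of x (seeded with the first
   coordinate; for n = 0 both are 0). *)
Definition vmax (x : 'cV[R]_n) : R :=
  \big[Num.max/head 0 [seq x i 0 | i <- enum 'I_n]]_(i < n) x i 0.
Definition vmin (x : 'cV[R]_n) : R :=
  \big[Num.min/head 0 [seq x i 0 | i <- enum 'I_n]]_(i < n) x i 0.

Definition inPolytope (x : 'cV[R]_n) : Prop := (vmax x - vmin x) / 2 <= 1.

Definition dotv (b x : 'cV[R]_n) : R := \sum_(i < n) b i 0 * x i 0.

Definition is_face (F : 'cV[R]_n -> Prop) : Prop :=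
  (exists x, F x) /\
  ((forall x, F x <-> inPolytope x) \/
   exists (b : 'cV[R]_n) (c : R),
     (forall x, inPolytope x -> dotv b x <= c) /\
     (forall x, F x <-> (inPolytope x /\ dotv b x = c))).

Definition stochastic (A : 'M[R]_n) : Prop :=
  (forall i j, 0 <= A i j) /\ (forall i, \sum_(j < n) A i j = 1).

End Defs.

(* Main.v *)
Require Import Defs.
From mathcomp Require Import all_boot all_order all_algebra.
From mathcomp Require Import reals.
From mathcomp Require Import ring lra.
Import Order.TTheory GRing.Theory Num.Theory.
Local Open Scope ring_scope.

Section L.
Variable R : realType.
Variable n : nat.

Lemma vmax_le (y : 'cV[R]_n) m : (forall i, y i 0 <= m) -> (0 < n)%N -> vmax y <= m.
Proof.
move=> H; case: n y H => // k y H _; rewrite /vmax.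
apply: (big_ind (fun v => v <= m)) => //.
- by rewrite enum_ordSl /= H.
- by move=> a b ha hb; rewrite ge_max ha hb.
Qed.

Lemma vmin_ge (y : 'cV[R]_n) m : (forall i, m <= y i 0) -> (0 < n)%N -> m <= vmin y.
Proof.
move=> H; case: n y H => // k y H _; rewrite /vmin.
apply: (big_ind (fun v => m <= v)) => //.
- by rewrite enum_ordSl /= H.
- by move=> a b ha hb; rewrite le_min ha hb.
Qed.

Lemma le_vmax (y : 'cV[R]_n) i : y i 0 <= vmax y.
Proof. by rewrite /vmax (bigD1 i) //= le_max lexx. Qed.

Lemma vmin_le (y : 'cV[R]_n) i : vmin y <= y i 0.
Proof. by rewrite /vmin (bigD1 i) //= ge_min lexx. Qed.

Lemma stoch_P (A : 'M[R]_n) y : stochastic A -> inPolytope y -> inPolytope (A *m y).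
Proof.
move=> [A0 A1] Py; rewrite /inPolytope.
case: (posnP n) => [n0|npos].
  rewrite /vmax /vmin; move: A y Py A0 A1; rewrite n0 => A y _ _ _.
  by rewrite !big_ord0 /= subrr mul0r ler01.
have hmax : vmax (A *m y) <= vmax y.
  apply: vmax_le => // i; rewrite mxE.
  have h : \sum_j A i j * y j 0 <= \sum_j A i j * vmax y.
    by apply: ler_sum => j _; rewrite ler_wpM2l // le_vmax.
  by rewrite -mulr_suml A1 mul1r in h.
have hmin : vmin y <= vmin (A *m y).
  apply: vmin_ge => // i; rewrite mxE.
  have h : \sum_j A i j * vmin y <= \sum_j A i j * y j 0.
    by apply: ler_sum => j _; rewrite ler_wpM2l // vmin_le.
  by rewrite -mulr_suml A1 mul1r in h.
move: Py; rewrite /inPolytope; lra.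
Qed.

Lemma dotvD b (u v : 'cV[R]_n) d :
  dotv b (d *: u + (1 - d) *: v) = d * dotv b u + (1 - d) * dotv b v.
Proof.
rewrite /dotv !mulr_sumr -big_split /=; apply: eq_bigr => i _.
rewrite !mxE; ring.
Qed.

Lemma key (F : 'cV[R]_n -> Prop) (A M : 'M[R]_n) y d :
  is_face F -> stochastic A -> stochastic M -> inPolytope y -> 0 < d -> d < 1 ->
  F (d *: (A *m y) + (1 - d) *: (A *m (M *m y))) -> F (A *m y).
Proof.
move=> [_ [HF|[b [c [Hv HF]]]]] sA sM Py d0 d1 HFy.
  by apply/HF; apply: stoch_P.
have P1 := stoch_P _ _ sA Py.
have P2 := stoch_P _ _ sA (stoch_P _ _ sM Py).
apply/HF; split => //.
move/HF: HFy => [_]; rewrite dotvD => E.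
have h1 := Hv _ P1; have h2 := Hv _ P2.
set u := dotv b (A *m y) in E h1 *; set v := dotv b _ in E h2.
have e1 : 0 <= d * (c - u) by apply: mulr_ge0; lra.
have e2 : 0 <= (1 - d) * (c - v) by apply: mulr_ge0; lra.
have e3 : d * (c - u) = 0 by nra.
move: e3 => /eqP; rewrite mulf_eq0 => /orP [/eqP|/eqP]; lra.
Qed.

Lemma stoch1 : stochastic (1%:M : 'M[R]_n).
Proof.
split=> [i j|i]; first by rewrite mxE ler0n.
rewrite (bigD1 i) //= big1 ?addr0; first by rewrite mxE eqxx.
by move=> j /negPf; rewrite mxE eq_sym => ->.
Qed.

Lemma main (F : 'cV[R]_n -> Prop) (A B : 'M[R]_n) y :
  is_face F -> stochastic A -> stochastic B -> (forall i, 0 < B i i) ->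
  inPolytope y -> F (A *m B *m y) -> F (A *m y).
Proof.
move=> HF sA [B0 B1] Bd Py HB.
pose e := \big[Order.min/1]_(i < n) B i i.
pose d := Order.min (1/2) e.
have e0 : 0 < e.
  apply: (big_ind (fun v => 0 < v)) => [|a b ha hb|i _]; [lra| by rewrite lt_min ha hb| exact: Bd].
have d0 : 0 < d by rewrite lt_min e0; apply/andP; split => //; lra.
have d1 : d <= 1/2 by rewrite ge_min lexx.
have dB i : d <= B i i.
  by rewrite ge_min; apply/orP; right; rewrite /e (bigD1 i) //= ge_min lexx.
have d1' : d < 1 by lra.
pose M := \matrix_(i, j) ((B i j - d * (i == j)%:R) / (1 - d)).
have sM : stochastic M.
  split=> [i j|i].
    rewrite mxE; apply: divr_ge0; last lra.
    case: eqP => [->|_]; first by rewrite mulr1 subr_ge0.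
    by rewrite mulr0 subr0.
  under eq_bigr do rewrite mxE.
  rewrite -mulr_suml sumrB -mulr_sumr B1 (bigD1 i) //= big1 ?addr0 ?eqxx.
    by rewrite mulr1 divff //; lra.
  by move=> j /negPf; rewrite eq_sym => ->.
have E : A *m B *m y = d *: (A *m y) + (1 - d) *: (A *m (M *m y)).
  have EB : B = d *: 1%:M + (1 - d) *: M.
    apply/matrixP => i j; rewrite !mxE.
    by case: eqP => _ /=; field; lra.
  by rewrite EB mulmxDr -!scalemxAr mulmx1 mulmxDl -!scalemxAl -mulmxA.
rewrite E in HB.
exact: (key _ _ _ _ _ HF sA sM Py d0 d1' HB).
Qed.

End L.

Theorem lemma6 (R : realType) (n : nat) (x : 'cV[R]_n) (F : 'cV[R]_n -> Prop)
  (B : 'M[R]_n) :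
  inPolytope x -> is_face F -> stochastic B -> (forall i, 0 < B i i) ->
  (F (B *m x) -> F x) /\
  (forall A C : 'M[R]_n, stochastic A -> stochastic C ->
     F (A *m B *m C *m x) -> F (A *m C *m x)).
Proof.
move=> Px HF sB Bd; split.
  move=> H; have := main _ _ _ _ _ _ HF (stoch1 R n) sB Bd Px.
  by rewrite !mul1mx; apply.
move=> A C sA sC H; rewrite -mulmxA.
apply: (main _ _ _ _ _ _ HF sA sB Bd (stoch_P _ _ _ _ sC Px)).
by rewrite !mulmxA.
Qed.
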